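(* Assume the input embeddings $e_1,\dots,e_N$ are orthonormal and the output embeddings $u_1,\dots,u_M$ are orthonormal. Let $W_t$ solve the gradient flow $\dot W_t=-\nabla\mathcal{L}(W_t)$ from an arbitrary $W_0$, and write $w_i(t)=u_i^\top W_t e_x$ for a fixed $x\in[N]$. Then for all $i,j\in[M]\setminus\{f^*(x)\}$ the quantity $\exp(-w_i(t))-\exp(-w_j(t))$ is constant in $t$, and $\sum_{i\in[M]}w_i(t)$ is constant in $t$.
   Context: Integers $N,M\ge2$, $d\ge\max(N,M)$. Fixed embeddings $e_1,\dots,e_N,u_1,\dots,u_M\in\mathbb{R}^d$, target $f^*:[N]\to[M]$, probability distribution $p$ on $[N]$. For $W\in\mathbb{R}^{d\times d}$: $p_W(y\mid x)=\exp(u_y^\top We_x)/\sum_{z\in[M]}\exp(u_z^\top We_x)$, $\mathcal{L}(W)=-\sum_x p(x)\log p_W(f^*(x)\mid x)$. Gradients are for the Frobenius inner product. *)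

(* Defs.v *)
From HB Require Import structures.
From mathcomp Require Import all_boot all_order all_algebra.
From mathcomp Require Import all_classical all_reals all_analysis.
Set Implicit Arguments. Unset Strict Implicit. Unset Printing Implicit Defensive.
Import Order.TTheory GRing.Theory Num.Theory.
Import numFieldNormedType.Exports.
Local Open Scope ring_scope.
Local Open Scope classical_set_scope.

Section Defs.
Variables (R : realType) (N M d : nat).
Variables (e : 'I_N -> 'cV[R]_d) (u : 'I_M -> 'cV[R]_d).
Variables (fstar : 'I_N -> 'I_M) (p : 'I_N -> R).

Definition logit (W : 'M[R]_d) (y : 'I_M) (x : 'I_N) : R :=
  ((u y)^T *m W *m e x) 0 0.

Definition pW (W : 'M[R]_d) (y : 'I_M) (x : 'I_N) : R :=
  expR (logit W y x) / \sum_(z < M) expR (logit W z x).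

Definition loss (W : 'M[R]_d) : R :=
  - \sum_(x < N) p x * ln (pW W (fstar x) x).
End Defs.

Definition frob (R : realType) (m n : nat) (A B : 'M[R]_(m, n)) : R :=
  \sum_(i < m) \sum_(j < n) A i j * B i j.

Definition is_gradient (R : realType) (m n : nat)
  (L : 'M[R]_(m, n) -> R) (W G : 'M[R]_(m, n)) : Prop :=
  differentiable L W /\ forall V, 'd L W V = frob G V.

Definition orthonormal_family (R : realType) (k d : nat) (v : 'I_k -> 'cV[R]_d) : Prop :=
  forall i j, ((v i)^T *m v j) 0 0 = (i == j)%:R.

(* Main.v *)
Require Import Defs.
From HB Require Import structures.
From mathcomp Require Import all_boot all_order all_algebra.
From mathcomp Require Import all_classical all_reals all_analysis.
From mathcomp Require Import ring lra.
Import Order.TTheory GRing.Theory Num.Theory.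
Import numFieldNormedType.Exports.
Local Open Scope ring_scope.
Local Open Scope classical_set_scope.

Section H.
Context {R : realType} {N M d : nat} (e : 'I_N -> 'cV[R]_d) (u : 'I_M -> 'cV[R]_d).

Lemma logitE W y x : logit e u W y x = \sum_a \sum_b u y a 0 * W a b * e x b 0.
Proof.
rewrite /logit mxE exchange_big /=; apply: eq_bigr => b _.
rewrite mxE big_distrl /=; apply: eq_bigr => a _; by rewrite mxE.
Qed.

Lemma frobE (G : 'M[R]_d) i x : frob G (u i *m (e x)^T) = logit e u G i x.
Proof.
rewrite logitE /frob; apply: eq_bigr => a _; apply: eq_bigr => b _.
rewrite mxE big_ord1 !mxE; ring.
Qed.

Lemma cont_sum (T : topologicalType) n (f : 'I_n -> T -> R) :
  (forall i, continuous (f i)) -> continuous (fun y => \sum_i f i y).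
Proof.
move=> fc; rewrite -fct_sumE; apply: (big_ind (fun g : T -> R => continuous g)) => //.
  exact: cst_continuous.
move=> g h gc hc z. apply: (@continuousD R R^o T g h z (gc z) (hc z)).
Qed.

Lemma logit_cont y x : continuous (fun W => logit e u W y x).
Proof.
have -> : (fun W => logit e u W y x) = fun W => \sum_a \sum_b u y a 0 * W a b * e x b 0.
  by apply/funext => W; rewrite logitE.
apply: cont_sum => a; apply: cont_sum => b z.
apply: (continuousM (s:=fun W : 'M[R]_d => u y a 0 * W a b) (t:=fun _ => e x b 0) (x:=z)); last exact: cst_continuous.
apply: (continuousM (s:=fun _ : 'M[R]_d => u y a 0) (t:=fun W : 'M[R]_d => W a b) (x:=z)); first exact: cst_continuous.
exact: coord_continuous.
Qed.

End H.
Section H2.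
Context {R : realType}.

Lemma isd_lin (x c k : R) : is_derive x 1 (fun h : R => h * c + k) c.
Proof.
have H := is_deriveD (is_deriveM (is_derive_id x (1:R)) (is_derive_cst c x 1)) (is_derive_cst k x 1).
apply: (is_derive_eq H); rewrite /= /GRing.scale /=; ring.
Qed.

Lemma isd_sumf n (h : 'I_n -> R -> R) (x : R) (dh : 'I_n -> R) :
  (forall i, is_derive x 1 (h i) (dh i)) ->
  is_derive x 1 (fun y => \sum_i h i y) (\sum_i dh i).
Proof. move=> H; rewrite -fct_sumE; exact: is_derive_sum. Qed.

Lemma isd_comp (f g : R -> R) (x a b : R) : is_derive (g x) 1 f a -> is_derive x 1 g b ->
  is_derive x 1 (fun y => f (g y)) (a * b).
Proof. move=> H1 H2; exact: (is_derive1_comp H1 H2). Qed.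

Lemma isd_scal (f : R -> R) (x k df : R) : is_derive x 1 f df ->
  is_derive x 1 (fun y => k * f y) (k * df).
Proof.
move=> H; have H' := is_deriveM (is_derive_cst k x 1) H.
apply: (is_derive_eq H'); rewrite /= /GRing.scale /=; ring.
Qed.

Lemma isd_sub (f g : R -> R) (x df dg : R) : is_derive x 1 f df -> is_derive x 1 g dg ->
  is_derive x 1 (fun y => f y - g y) (df - dg).
Proof. move=> H1 H2; exact: (is_deriveB H1 H2). Qed.

Lemma isd_neg (f : R -> R) (x df : R) : is_derive x 1 f df ->
  is_derive x 1 (fun y => - f y) (- df).
Proof. move=> H1; exact: (is_deriveN H1). Qed.

Lemma sum_gt0 n (a : 'I_n -> R) : (0 < n)%N -> 0 < \sum_z expR (a z).
Proof.
case: n a => // n a _; rewrite big_ord_recl; apply: ltr_pwDl; first exact: expR_gt0.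
by apply: sumr_ge0 => z _; apply: ltW; apply: expR_gt0.
Qed.

Lemma dlse n (a b : 'I_n -> R) : (0 < n)%N ->
  is_derive (0:R) 1 (fun h => ln (\sum_z expR (h * b z + a z)))
    ((\sum_z b z * expR (a z)) / \sum_z expR (a z)).
Proof.
move=> n0.
have dS : is_derive (0:R) 1 (fun h => \sum_z expR (h * b z + a z)) (\sum_z b z * expR (a z)).
  apply: isd_sumf => z.
  have := @isd_comp expR (fun h => h * b z + a z) 0 _ _ (is_derive_expR _) (isd_lin 0 (b z) (a z)).
  by rewrite mul0r add0r mulrC.
have H := @isd_comp (@ln R) _ 0 _ _ (is_derive1_ln (sum_gt0 _ (fun z => 0 * b z + a z) n0)) dS.
apply: (is_derive_eq H); rewrite mulrC.
congr (_ / _); apply: eq_bigr => z _; congr expR; ring.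
Qed.
End H2.

Section H3.
Context {R : realType} {N M d : nat} (e : 'I_N -> 'cV[R]_d) (u : 'I_M -> 'cV[R]_d)
  (fstar : 'I_N -> 'I_M) (p : 'I_N -> R).
Hypothesis (he : orthonormal_family e) (hu : orthonormal_family u).

Lemma logit_shift W i x (h : R) y x' :
  logit e u (h *: (u i *m (e x)^T) + W) y x' =
  h * ((y == i)%:R * (x == x')%:R) + logit e u W y x'.
Proof.
rewrite /logit mulmxDr mulmxDl mxE; congr (_ + _).
rewrite -scalemxAr -scalemxAl mxE !mulmxA -(mulmxA _ (u i)) -mulmxA.
by rewrite -(mulmxA (u i)) mulmxA mxE big_ord1 hu he.
Qed.


Lemma loss_form W : (0 < M)%N -> loss e u fstar p W =
  - \sum_x' p x' * (logit e u W (fstar x') x' - ln (\sum_z expR (logit e u W z x'))).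
Proof.
move=> M0; rewrite /loss; congr (- _); apply: eq_bigr => x' _; congr (_ * _).
rewrite /pW ln_div ?expRK // posrE; [exact: expR_gt0 | exact: sum_gt0].
Qed.

Lemma grad (M0 : (0 < M)%N) W G i x : is_gradient (loss e u fstar p) W G ->
  logit e u G i x = - (p x * ((fstar x == i)%:R - pW e u W i x)).
Proof.
move=> [dL hG]; rewrite -frobE -hG -deriveE //.
set V := u i *m (e x)^T.
pose g := fun h : R => - \sum_x' p x' * ((h * ((fstar x' == i)%:R * (x == x')%:R)
   + logit e u W (fstar x') x') - ln (\sum_z expR (h * ((z == i)%:R * (x == x')%:R) + logit e u W z x'))).
have gE : forall h, loss e u fstar p (h *: V + W) = g h.
  move=> h; rewrite loss_form //; congr (- _); apply: eq_bigr => x' _.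
  by rewrite logit_shift; under eq_bigr do rewrite logit_shift.
have -> : 'D_V (loss e u fstar p) W = 'D_1 g 0.
  have L0 : loss e u fstar p W = g 0 by rewrite -gE scale0r add0r.
  rewrite /derive /= (_ : (fun h : R => h^-1 *: (loss e u fstar p (h *: V + W) - loss e u fstar p W)) = (fun h => h^-1 *: (g (h%:A + 0) - g 0))) //.
  apply/funext => h; rewrite gE L0 addr0; congr (_ *: (g _ - _)); exact/esym/mulr1.
have dg : is_derive (0:R) 1 g (- \sum_x' p x' * ((fstar x' == i)%:R * (x == x')%:R -
   (\sum_z ((z == i)%:R * (x == x')%:R) * expR (logit e u W z x')) / \sum_z expR (logit e u W z x'))).
  apply: isd_neg; apply: isd_sumf => x'; apply: isd_scal; apply: isd_sub.
    exact: isd_lin.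
  exact: dlse.
rewrite derive_val; congr (- _).
rewrite (bigD1 x) //= [X in _ + X]big1 ?addr0; last first.
  move=> x' /= nx; rewrite eq_sym in nx; rewrite (negbTE nx) !mulr0 big1 ?mul0r ?subr0 ?mulr0 //.
  by move=> z _; rewrite mulr0 mul0r.
rewrite eqxx mulr1; congr (_ * (_ - _)).
rewrite /pW; congr (_ / _).
rewrite (bigD1 i) //= eqxx mulr1 mul1r big1 ?addr0 //.
by move=> z /= /negbTE ->; rewrite mul0r mul0r.
Qed.

Lemma dlogit (W : R -> 'M[R]_d) (t : R) y x : derivable W t 1 ->
  is_derive t 1 (fun s => logit e u (W s) y x) (logit e u ('D_1 W t) y x).
Proof.
move=> dW.
have ent a b : is_derive t 1 (fun s => W s a b) (('D_1 W t) a b).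
  apply: DeriveDef; first by move/derivable_mxP: dW.
  by rewrite (derive_mx dW) mxE.
have -> : (fun s => logit e u (W s) y x) =
   fun s => \sum_a \sum_b u y a 0 * W s a b * e x b 0.
  by apply/funext => s; rewrite logitE.
rewrite logitE; apply: isd_sumf => a; apply: isd_sumf => b.
have -> : (fun s => u y a 0 * W s a b * e x b 0) = fun s => (u y a 0 * e x b 0) * W s a b.
  by apply/funext => s; ring.
have -> : u y a 0 * ('D_1 W t) a b * e x b 0 = (u y a 0 * e x b 0) * ('D_1 W t) a b by ring.
exact: isd_scal.
Qed.

Lemma logitN G y x : logit e u (- G) y x = - logit e u G y x.
Proof. by rewrite /logit mulmxN mulNmx mxE. Qed.

End H3.

Lemma const_on {R : realType} (f : R -> R) : {within `[0, +oo[, continuous f} ->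
  (forall s : R, 0 < s -> is_derive s 1 f 0) -> forall t : R, 0 <= t -> f t = f 0.
Proof.
move=> fc fd t; rewrite le_eqVlt => /orP [/eqP <- // | t0].
have fd' : forall s, s \in `]0, t[%R -> is_derive s 1 f 0.
  by move=> s hs; apply: fd; rewrite (itvP hs).
have fc' : {within `[0, t], continuous f}.
  apply: continuous_subspaceW fc => s; rewrite /= !in_itv /= => /andP[-> _] //.
have [c _] := MVT t0 fd' fc'.
by rewrite mul0r => /eqP; rewrite subr_eq0 => /eqP.
Qed.


Arguments isd_comp {R f g x a b}.
Arguments isd_sub {R f g x df dg}.
Arguments isd_neg {R f x df}.
Arguments isd_sumf {R n h x dh}.

Lemma within_comp {R : realType} {d : nat} (W : R -> 'M[R]_d) (F : 'M[R]_d -> R) (A : set R) :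
  continuous F -> {within A, continuous W} -> {within A, continuous (fun s => F (W s))}.
Proof. move=> Fc Wc z; exact: (continuous_comp (Wc z) (Fc _)). Qed.

Theorem mainTheorem4 (R : realType) (N M d : nat)
  (hN : (2 <= N)%N) (hM : (2 <= M)%N) (hd : (maxn N M <= d)%N)
  (e : 'I_N -> 'cV[R]_d) (u : 'I_M -> 'cV[R]_d)
  (fstar : 'I_N -> 'I_M) (p : 'I_N -> R)
  (hp0 : forall x, 0 <= p x) (hp1 : \sum_(x < N) p x = 1)
  (he : orthonormal_family e) (hu : orthonormal_family u)
  (W : R -> 'M[R]_d)
  (hWc : {within `[0, +oo[, continuous W})
  (hflow : forall t : R, 0 < t ->
     exists G : 'M[R]_d,
       is_gradient (loss e u fstar p) (W t) G /\
       derivable W t 1 /\ 'D_1 W t = - G)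
  (x : 'I_N) :
  (forall i j : 'I_M, i != fstar x -> j != fstar x -> forall t : R, 0 <= t ->
     expR (- logit e u (W t) i x) - expR (- logit e u (W t) j x) =
     expR (- logit e u (W 0) i x) - expR (- logit e u (W 0) j x)) /\
  (forall t : R, 0 <= t ->
     \sum_(i < M) logit e u (W t) i x = \sum_(i < M) logit e u (W 0) i x).
Proof.
have M0 : (0 < M)%N by apply: leq_trans hM.
pose c i s := logit e u (W s) i x.
have dc : forall i (s : R), 0 < s ->
    is_derive s 1 (c i) (p x * ((fstar x == i)%:R - pW e u (W s) i x)).
  move=> i s s0; have [G [hG [dW DW]]] := hflow s s0.
  have H := @dlogit R N M d e u W s i x dW.
  by rewrite DW logitN (@grad R N M d e u fstar p he hu M0 (W s) G i x hG) opprK in H.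
pose S s := \sum_z expR (logit e u (W s) z x).
have S0 s : S s != 0 by apply: lt0r_neq0; apply: sum_gt0.
split.
- move=> i j hi hj.
  have hi' : (fstar x == i) = false by rewrite eq_sym (negbTE hi).
  have hj' : (fstar x == j) = false by rewrite eq_sym (negbTE hj).
  apply: (@const_on R (fun s => expR (- c i s) - expR (- c j s))).
    apply: (@within_comp R d W (fun V => expR (- logit e u V i x) - expR (- logit e u V j x))) => //.
    move=> V; apply: (continuousB (f := fun V => expR (- logit e u V i x)) (g := fun V => expR (- logit e u V j x))).
      apply: (continuous_comp (f := fun V => - logit e u V i x)); last exact: continuous_expR.
      by apply: continuousN; apply: logit_cont.
    apply: (continuous_comp (f := fun V => - logit e u V j x)); last exact: continuous_expR.
    by apply: continuousN; apply: logit_cont.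
  move=> s s0.
  have H := isd_sub (isd_comp (is_derive_expR _) (isd_neg (dc i s s0)))
                    (isd_comp (is_derive_expR _) (isd_neg (dc j s s0))).
  apply: (is_derive_eq H).
  rewrite hi' hj' /pW -/(S s) /c !expRN.
  rewrite (_ : false%:R = 0 :> R) // !sub0r.
  by field; rewrite S0 !gt_eqF ?expR_gt0.
- move=> t t0; apply: (@const_on R (fun s => \sum_i c i s) _ _ t t0).
    apply: (@within_comp R d W (fun V => \sum_i logit e u V i x)) => //.
    by apply: cont_sum => i; apply: logit_cont.
  move=> s s0.
  have H := isd_sumf (fun i => dc i s s0).
  apply: (is_derive_eq H).
  rewrite -mulr_sumr sumrB (bigD1 (fstar x)) //= eqxx big1 ?addr0; last first.
    by move=> z /= /negbTE; rewrite eq_sym => ->.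
  rewrite /pW -mulr_suml -/(S s) divff // subrr mulr0 //.
Qed.
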